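(* Let $X$ be a topological space equipped with a continuous binary operation $*:X\times X\to X$ and a point $e\in X$ such that $x*e=x=e*x$ and $x*x=x$ for all $x\in X$ (a topological idempotent unitary magma). Then the fundamental group $\pi_1(X,e)$ is trivial. *)

(* Defs.v *)
From HB Require Import structures.
From mathcomp Require Import all_boot all_order all_algebra.
From mathcomp Require Import all_classical all_reals topology normedtype.
From mathcomp Require Import Rstruct Rstruct_topology.
From Stdlib Require Import Reals.

Set Implicit Arguments.
Unset Strict Implicit.
Unset Printing Implicit Defensive.

Import Order.TTheory GRing.Theory Num.Theory.
Local Open Scope classical_set_scope.
Local Open Scope ring_scope.

Definition unitI : set R := `[0%R, 1%R].

(* A loop in X based at e: a continuous map I -> X with f 0 = f 1 = e
   (represented as a function R -> X continuous on I). *)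
Definition loop (X : topologicalType) (e : X) (f : R -> X) : Prop :=
  {within unitI, continuous f} /\ f 0%R = e /\ f 1%R = e.

Definition loop_homotopic (X : topologicalType) (e : X) (f g : R -> X) : Prop :=
  exists H : R * R -> X,
    {within unitI `*` unitI, continuous H} /\
    (forall s, unitI s -> H (s, 0%R) = f s /\ H (s, 1%R) = g s) /\
    (forall t, unitI t -> H (0%R, t) = e /\ H (1%R, t) = e).

(* pi_1(X, e) is trivial: every loop at e is homotopic rel endpoints to the
   constant loop, i.e. the set of homotopy classes of loops is a singleton. *)
Definition pi1_trivial (X : topologicalType) (e : X) : Prop :=
  forall f : R -> X, loop e f -> loop_homotopic e f (fun _ => e).

(* Main.v *)
Require Import Defs.
From mathcomp Require Import all_boot all_classical topology.
From HB Require Import structures.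
From mathcomp Require Import all_order all_algebra.
From mathcomp Require Import all_reals normedtype.
From mathcomp Require Import Rstruct Rstruct_topology.
From mathcomp Require Import lra.
From Stdlib Require Import Reals.
Import Order.TTheory GRing.Theory Num.Theory.

Section Helpers.
Local Open Scope ring_scope.
Local Open Scope classical_set_scope.

Lemma cD (T : topologicalType) (g h : T -> R) p :
  {for p, continuous g} -> {for p, continuous h} -> {for p, continuous (fun q => g q + h q)}.
Proof. move=> a b; exact: (@cvgD _ R^o _ _ _ g h _ _ a b). Qed.
Lemma cN (T : topologicalType) (g : T -> R) p :
  {for p, continuous g} -> {for p, continuous (fun q => - g q)}.
Proof. move=> a; exact: (@cvgN _ R^o _ _ _ g _ a). Qed.
Lemma cM (T : topologicalType) (g h : T -> R) p :
  {for p, continuous g} -> {for p, continuous h} -> {for p, continuous (fun q => g q * h q)}.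
Proof. move=> a b; exact: (@cvgM _ _ _ _ g h _ _ a b). Qed.
Lemma cA (T : topologicalType) (g : T -> R) p :
  {for p, continuous g} -> {for p, continuous (fun q => `|g q|)}.
Proof. move=> a; exact: (@cvg_norm _ R^o _ _ _ g _ a). Qed.
Lemma cC (T : topologicalType) (c : R) p : {for p, continuous (fun _ : T => c)}.
Proof. exact: cvg_cst. Qed.
Lemma cfst (p : R * R) : {for p, continuous (fun q : R * R => q.1)}.
Proof. case: p => s t; exact: cvg_fst. Qed.
Lemma csnd (p : R * R) : {for p, continuous (fun q : R * R => q.2)}.
Proof. case: p => s t; exact: cvg_snd. Qed.
Lemma half_ge0 (x : R) : x = 1/2 -> 0 <= x.
Proof. move=> ->; lra. Qed.
Lemma half_lt1 (x : R) : x = 1/2 -> (1 <= x) = false.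
Proof. move=> ->; apply/negbTE; rewrite -ltNge; lra. Qed.
End Helpers.

Ltac ctac := repeat first [apply: (@cD _ (fun q => _) (fun q => _)) | apply: (@cN _ (fun q => _)) | apply: (@cM _ (fun q => _) (fun q => _)) | apply: (@cA _ (fun q => _)) | apply: cfst | apply: csnd | apply: cC].

Theorem corollary2p1 (X : topologicalType) (op : X -> X -> X) (e : X)
  (hcont : continuous (fun p : X * X => op p.1 p.2))
  (hunit : forall x : X, op x e = x /\ op e x = x)
  (hidem : forall x : X, op x x = x) :
  pi1_trivial e.
Proof.
Local Open Scope classical_set_scope.
Local Open Scope ring_scope.
move=> f [fc [f0 f1]].
pose cl (x : R) : R := Num.min (Num.max x 0) 1.
have clI x : unitI (cl x).
  rewrite /unitI /= in_itv /= /cl; apply/andP; split.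
    by rewrite le_min ler01 le_max lexx orbT.
  by rewrite ge_min lexx orbT.
have clid x : unitI x -> cl x = x.
  rewrite /unitI /= in_itv /= => /andP[h0 h1].
  by rewrite /cl (max_idPl h0) (min_idPl h1).
have clc : continuous cl.
  move=> x.
  have := (@continuous_min _ _ (fun y : R => Num.max y 0) (fun _ => 1) x).
  apply; last exact: cvg_cst.
  have := (@continuous_max _ _ (fun y : R => y) (fun _ => 0) x).
  by apply; [exact: cvg_id | exact: cvg_cst].
pose F x := f (cl x).
have Fc : continuous F.
  move=> x.
  have h := (subspace_continuousP unitI f).1 fc (cl x) (clI x).
  apply: (cvg_comp cl f _ h).
  move=> P Pw.
  have := clc x _ Pw.
  move=> H.
  have Hu : (cl @ nbhs x) unitI.
    by apply: (@filterE _ (nbhs x) _ (fun y => unitI (cl y))) => y; exact: clI.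
  by apply: filterS2 Hu H => t ut /(_ ut).
have F0 x : x <= 0 -> F x = e.
  move=> hx; rewrite /F /cl (max_idPr hx) (min_idPl ler01); exact: f0.
have F1 x : 1 <= x -> F x = e.
  move=> hx; rewrite /F /cl (max_idPl (le_trans ler01 hx)) (min_idPr hx); exact: f1.
have Fid x : unitI x -> F x = f x by move=> hx; rewrite /F clid.
have opc (a b : R * R -> R) : continuous a -> continuous b ->
    continuous (fun p => op (F (a p)) (F (b p))).
  move=> ca cb p.
  apply: (@continuous2_cvg _ _ _ _ (nbhs p) _ (fun q => F (a q)) (fun q => F (b q)) op (F (a p)) (F (b p)) (hcont (F (a p), F (b p)))).
    exact: (continuous_comp (ca p) (Fc _)).
  exact: (continuous_comp (cb p) (Fc _)).
have Fcc (a : R * R -> R) : continuous a -> continuous (fun p => F (a p)).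
  by move=> ca p; exact: (continuous_comp (ca p) (Fc _)).
pose a1 (p : R * R) : R := 1 - 2 * p.2 + 2 * p.2 * `|2 * p.1 - 1|.
pose b1 (p : R * R) : R := (1 - 2 * p.2) * p.1 + 2 * p.2 * (2 * p.1 - 1).
pose c2 (p : R * R) : R := 1 - (2 - 2 * p.2) * (1 - `|2 * p.1 - 1|).
have ca1 : continuous a1 by move=> p; rewrite /a1; ctac.
have cb1 : continuous b1 by move=> p; rewrite /b1; ctac.
have cc2 : continuous c2 by move=> p; rewrite /c2; ctac.
pose K1 p := op (F (a1 p)) (F (b1 p)).
pose K2 p := F (c2 p).
pose H p := if p.2 <= 1/2 then K1 p else K2 p.
have glue p : p.2 = 1/2 -> K1 p = K2 p.
  move=> ht; rewrite /K1 /K2.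
  have [h|h] := lerP 0 (2 * p.1 - 1).
    have ea : a1 p = 2 * p.1 - 1 by rewrite /a1 ht (ger0_norm h); lra.
    have eb : b1 p = 2 * p.1 - 1 by rewrite /b1 ht; lra.
    have ec : c2 p = 2 * p.1 - 1 by rewrite /c2 ht (ger0_norm h); lra.
    by rewrite ea eb ec hidem.
  have eb : F (b1 p) = e by apply: F0; rewrite /b1 ht; lra.
  have ea : a1 p = c2 p by rewrite /a1 /c2 ht (ltr0_norm h); lra.
  by rewrite eb (hunit _).1 ea.
have Hc : continuous H.
  apply/continuous_subspace_setT.
  pose A := [set p : R * R | p.2 <= 1/2].
  pose B := [set p : R * R | 1/2 <= p.2].
  have -> : [set: R * R] = A `|` B.
    apply/seteqP; split => p // _; rewrite /A /B /=.
    by case: (lerP p.2 (1/2)) => h; [left | right; exact: ltW].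
  have snd_c : continuous (fun q : R * R => q.2) by move=> p; exact: csnd.
  apply: withinU_continuous.
  - have cl1 := (continuous_closedP _).1 snd_c _ (@closed_le R (1/2)).
    exact: cl1.
  - have cl1 := (continuous_closedP _).1 snd_c _ (@closed_ge R (1/2)).
    exact: cl1.
  - apply: (@subspace_eq_continuous _ A _ K1).
      by move=> p; rewrite inE /A /= => hp; rewrite /from_subspace /H hp.
    by apply: continuous_subspaceT; apply: opc.
  - apply: (@subspace_eq_continuous _ B _ K2).
      move=> p; rewrite inE /B /= => hp; rewrite /from_subspace /H; case: ifP => // h.
      by rewrite glue //; apply/eqP; rewrite eq_le h hp.
    by apply: continuous_subspaceT; apply: Fcc.
have n0 : `|2 * 0 - 1| = 1 :> R by rewrite mulr0 sub0r normrN normr1.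
have e1 : 2 * 1 - 1 = 1 :> R by lra.
have n1 : `|2 * 1 - 1| = 1 :> R by rewrite e1 normr1.
have Z0 : Rdefinitions.IZR BinNums.Z0 = 0 :> R by [].
have Z1 : Rdefinitions.IZR (BinNums.Zpos BinNums.xH) = 1 :> R by [].
exists H; split; first exact: continuous_subspaceT.
rewrite ?Z0 ?Z1.
split.
- move=> s hs; split.
  + rewrite /H /=; case: ifP => h; last by rewrite (@half_ge0 (1/2) erefl) in h.
    rewrite /K1 F1; last by rewrite /a1 /=; lra.
    rewrite (_ : b1 (s, 0) = s); last by rewrite /b1 /=; lra.
    by rewrite Fid // (hunit _).2.
  + rewrite /H /=; case: ifP => h; first by rewrite (@half_lt1 (1/2) erefl) in h.
    by rewrite /K2 F1 // /c2 /=; lra.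
- move=> t ht; split.
  + rewrite /H /=; case: ifP => h.
      rewrite /K1 (F1 (a1 (0, t))); last by rewrite /a1 /= n0; lra.
      rewrite (F0 (b1 (0, t))); first by rewrite (hunit _).1.
      move: ht; rewrite /unitI /= in_itv /= => /andP[h0 _].
      by rewrite /b1 /=; lra.
    by rewrite /K2 F1 // /c2 /= n0; lra.
  + rewrite /H /=; case: ifP => h.
      rewrite /K1 (F1 (a1 (1, t))); last by rewrite /a1 /= n1; lra.
      rewrite (F1 (b1 (1, t))); first by rewrite (hunit _).1.
      by rewrite /b1 /=; lra.
    by rewrite /K2 F1 // /c2 /= n1; lra.
Qed.
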